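(* Let $3\le a<b$ be integers and for $z\in(0,1)$ let $$\tilde T(z)=\frac{\frac{z}{1-z}Z_0(z)+\ln(1-z)\,Z_1(z)}{a\,b\,(b-a)\,z^{a+b-2}},\qquad Z_j(z)=a(a-1)^j z^{a-1}-b(b-1)^jz^{b-1}.$$ (Wherever $h(z)\ne0$ and $z\neq z_r$, $\tilde T(z)=T(z,1/h(z))$ is the value of the threshold function at the critical point with $\alpha=1/h(z)$.) Then for all $z\in(0,z')$: $\tilde T'(z)>0\iff g(z)>0$; and for all $z\in(z',1)$: $\tilde T'(z)<0\iff g(z)>0$, where $z'=(a/b)^{1/(b-a)}$.
   Context: $T(z,\alpha)=\frac{-\ln(1-z)}{\alpha a z^{a-1}+(1-\alpha)bz^{b-1}}$. $f(z)=\frac{-\ln(1-z)(1-z)}{z}$, $g(z)=f(z)(b-1)(a-1)+\frac1{1-z}+2-b-a$, $h(z)=\frac{a z^{a-b}-b-f(z)(a(a-1)z^{a-b}-b(b-1))}{b((b-1)f(z)-1)}$; $z_r$ is the unique $z\in(0,1)$ with $f(z)=\frac1{b-1}$. *)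

(* Defs.v *)
From Stdlib Require Import Reals Lra Lia.
Open Scope R_scope.

Definition f_fun (z : R) : R := - ln (1 - z) * (1 - z) / z.

Definition g_fun (a b : nat) (z : R) : R :=
  f_fun z * (INR b - 1) * (INR a - 1) + / (1 - z) + 2 - INR b - INR a.

Definition Z_fun (a b j : nat) (z : R) : R :=
  INR a * (INR a - 1) ^ j * z ^ (a - 1) - INR b * (INR b - 1) ^ j * z ^ (b - 1).

Definition Ttilde (a b : nat) (z : R) : R :=
  (z / (1 - z) * Z_fun a b 0 z + ln (1 - z) * Z_fun a b 1 z)
  / (INR a * INR b * (INR b - INR a) * z ^ (a + b - 2)).

Definition z_prime (a b : nat) : R := Rpower (INR a / INR b) (/ INR (b - a)).

(* Main.v *)
Require Import Defs.
From Stdlib Require Import Reals Lra Lia.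
From Coquelicot Require Import Coquelicot.
Open Scope R_scope.
Lemma deriv_T a b z : (3<=a)%nat -> (a<b)%nat -> 0<z<1 ->
  derivable_pt_lim (Ttilde a b) z
   (Z_fun a b 0 z * g_fun a b z / ((1-z) * (INR a * INR b * (INR b - INR a) * z^(a+b-2)))).
Proof.
intros ha hab Hz.
destruct (Nat.le_exists_sub 3 a ha) as [p [-> _]].
destruct (Nat.le_exists_sub (S (p+3)) b hab) as [q [-> _]].
replace (p+3)%nat with (3+p)%nat by lia.
replace (q + S (3+p))%nat with (3+(p+S q))%nat by lia.
set (r := (p + S q)%nat).
assert (Hpr : (p < r)%nat) by lia.
assert (Hn: INR (3+r) - INR (3+p) <> 0).
{ apply Rminus_eq_contra, not_eq_sym, Rlt_not_eq, lt_INR; lia. }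
assert (H1: INR (3+p) <> 0) by (apply not_0_INR; lia).
assert (H2: INR (3+r) <> 0) by (apply not_0_INR; lia).
assert (H3: z^(3+p+(3+r)-2) <> 0) by (apply pow_nonzero; lra).
unfold g_fun, f_fun.
apply is_derive_Reals. unfold Ttilde, Z_fun.
replace (3+p-1)%nat with (S (S p)) by lia.
replace (3+r-1)%nat with (S (S r)) by lia.
replace (3+p+(3+r)-2)%nat with (S (S (S (S (p+r))))) in * by lia.
remember (S (S p)) as n1 eqn:E1.
remember (S (S r)) as n2 eqn:E2.
remember (S (S (S (S (p+r))))) as n3 eqn:E3.
remember (INR (3+p)) as A eqn:EA.
remember (INR (3+r)) as B eqn:EB.
auto_derive.
- repeat split; try lra.
  repeat apply Rmult_integral_contrapositive_currified; assumption.
- replace (1 + - z) with (1 - z) by ring.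
  subst n1 n2 n3 A B.
  change (3+p)%nat with (S(S(S p))) in *. change (3+r)%nat with (S(S(S r))) in *.
  cbn [Nat.pred]. rewrite !S_INR. cbn [pow] in *. rewrite !pow_add in *.
  rewrite ?S_INR in Hn, H1, H2.
  assert (z <> 0) by lra. assert (1 - z <> 0) by lra.
  assert (z^p <> 0) by (apply pow_nonzero; lra).
  assert (z^r <> 0) by (apply pow_nonzero; lra).
  rewrite plus_INR. repeat rewrite S_INR in Hn. field. repeat split; auto.
Qed.

Lemma pow_lt_strict x y n : 0 <= x < y -> (0 < n)%nat -> x^n < y^n.
Proof.
intros Hxy Hn. destruct n as [|n]; [lia|].
simpl. assert (H1 : x^n <= y^n) by (apply pow_incr; lra).
assert (H2 : 0 < y^n) by (apply pow_lt; lra).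
assert (H3 : 0 <= x^n) by (apply pow_le; lra).
nra.
Qed.

Lemma sign_lemma X K G l : K > 0 -> l = X * G / K ->
  (X > 0 -> (l > 0 <-> G > 0)) /\ (X < 0 -> (l < 0 <-> G > 0)).
Proof.
intros HK ->. assert (HK' : / K > 0) by (apply Rinv_0_lt_compat; lra).
unfold Rdiv. split; intro HX; split; intro H.
- destruct (Rle_lt_dec G 0) as [h|h]; auto. exfalso.
  assert (X * G <= 0) by nra. nra.
- assert (X*G > 0) by nra. nra.
- destruct (Rle_lt_dec G 0) as [h|h]; auto. exfalso.
  assert (X * G >= 0) by nra. nra.
- assert (X*G < 0) by nra. nra.
Qed.

Theorem mainTheorem9 (a b : nat) (ha : (3 <= a)%nat) (hab : (a < b)%nat) :
  (forall z : R, 0 < z < z_prime a b ->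
     exists l : R, derivable_pt_lim (Ttilde a b) z l /\ (l > 0 <-> g_fun a b z > 0)) /\
  (forall z : R, z_prime a b < z < 1 ->
     exists l : R, derivable_pt_lim (Ttilde a b) z l /\ (l < 0 <-> g_fun a b z > 0)).
Proof.
set (n := (b - a)%nat).
assert (Hn : (0 < n)%nat) by (unfold n; lia).
assert (Ha : 0 < INR a) by (apply lt_0_INR; lia).
assert (Hab : INR a < INR b) by (apply lt_INR; lia).
assert (Hq : 0 < INR a / INR b < 1).
{ split. apply Rdiv_lt_0_compat; lra. apply (Rmult_lt_reg_r (INR b)); [lra|].
  field_simplify; lra. }
assert (Hz0 : 0 < z_prime a b) by (unfold z_prime, Rpower; apply exp_pos).
assert (Hzn : z_prime a b ^ n = INR a / INR b).
{ rewrite <- Rpower_pow by lra. unfold z_prime. rewrite Rpower_mult.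
  rewrite Rinv_l. apply Rpower_1; lra. apply not_0_INR; lia. }
assert (Hz1 : z_prime a b < 1).
{ destruct (Rlt_le_dec (z_prime a b) 1) as [h|h]; auto.
  pose proof (pow_R1_Rle _ n h). lra. }
assert (HZ : forall z, 0 < z -> Z_fun a b 0 z = z^(a-1) * (INR a - INR b * z^n)).
{ intros z Hz. unfold Z_fun. simpl.
  replace (b-1)%nat with ((a-1) + n)%nat by (unfold n; lia). rewrite pow_add. ring. }
assert (HK : forall z, 0 < z < 1 ->
   (1-z) * (INR a * INR b * (INR b - INR a) * z^(a+b-2)) > 0).
{ intros z Hz. assert (0 < z^(a+b-2)) by (apply pow_lt; lra).
  apply Rmult_lt_0_compat. lra.
  repeat apply Rmult_lt_0_compat; lra. }
split; intros z Hz.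
- eexists; split. apply deriv_T; auto; lra.
  destruct (sign_lemma (Z_fun a b 0 z) _ (g_fun a b z) _ (HK z ltac:(lra)) eq_refl) as [S1 S2].
  apply S1.
  rewrite HZ by lra. apply Rmult_lt_0_compat. apply pow_lt; lra.
  assert (z^n < INR a / INR b). { rewrite <- Hzn. apply pow_lt_strict; auto; lra. }
  assert (INR b * z^n < INR a). { assert (INR b * (INR a / INR b) = INR a) by (field; lra). nra. }
  lra.
- eexists; split. apply deriv_T; auto; lra.
  destruct (sign_lemma (Z_fun a b 0 z) _ (g_fun a b z) _ (HK z ltac:(lra)) eq_refl) as [S1 S2].
  apply S2.
  rewrite HZ by lra.
  assert (z^n > INR a / INR b). { rewrite <- Hzn. apply pow_lt_strict; auto; lra. }
  assert (INR b * z^n > INR a). { assert (INR b * (INR a / INR b) = INR a) by (field; lra). nra. }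
  assert (0 < z^(a-1)) by (apply pow_lt; lra).
  nra.
Qed.
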